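(* For every integer $n\ge4$ and every integer $d$, $p_{n,d}(1,2)=p_{n,d}(1,3)$.
   Context: A cycle $(c_1\cdots c_k)$ means $c_1\mapsto c_2\mapsto\cdots\mapsto c_k\mapsto c_1$; $\operatorname{cdes}(c)=\lvert\{t\in[k]:c_t>c_{t+1}\}\rvert$, $\operatorname{casc}(c)=\lvert\{t\in[k]:c_t<c_{t+1}\}\rvert$ with $c_{k+1}=c_1$; the cyclic weight of a cycle is $\min(\operatorname{cdes}(c),\operatorname{casc}(c))$ and the cyclic weight of a permutation is the sum over its cycles. An odd order permutation is one all of whose cycles have odd length. $p_{n,d}(i,j)$ is the number of odd order permutations $\pi$ of $[n]$ with cyclic weight $d$ such that $\pi(i)=n$ and $\pi(n)=j$ (i.e. containing $i\,n\,j$ as a cyclic factor). *)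

(* Defs.v *)
(* The set [n] = {1,...,n} is modelled by 'I_n, the label
   k+1 corresponding to the ordinal k (this bijection preserves order). *)
From mathcomp Require Import all_boot all_order all_algebra all_fingroup.
Set Implicit Arguments. Unset Strict Implicit. Unset Printing Implicit Defensive.

(* cdes of the cycle C of s: number of positions t with c_t > c_{t+1},
   i.e. number of x in C with x > s x. *)
Definition cdes_cycle (n : nat) (s : 'S_n) (C : {set 'I_n}) : nat :=
  #|[set x in C | s x < x]|.

Definition casc_cycle (n : nat) (s : 'S_n) (C : {set 'I_n}) : nat :=
  #|[set x in C | x < s x]|.

Definition cyc_weight (n : nat) (s : 'S_n) : nat :=
  \sum_(C in porbits s) minn (cdes_cycle s C) (casc_cycle s C).

Definition odd_order_perm (n : nat) (s : 'S_n) : bool :=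
  [forall C in porbits s, odd #|C|].

Definition p_count (n : nat) (d : int) (i j : nat) : nat :=
  #|[set s : 'S_n | [&& odd_order_perm s,
       Posz (cyc_weight s) == d,
       [exists x : 'I_n, (x.+1 == i) && ((s x).+1 == n)] &
       [exists y : 'I_n, (y.+1 == n) && ((s y).+1 == j)]]]|.

(* Main.v *)
Require Import Defs.
From mathcomp Require Import all_boot all_order all_algebra all_fingroup zify.
Set Implicit Arguments. Unset Strict Implicit. Unset Printing Implicit Defensive.
Local Open Scope group_scope.

Section General.
Variable n : nat.
Implicit Types (s g : 'S_n) (C : {set 'I_n}).

Definition cnt s C (P : 'I_n -> 'I_n -> bool) := #|[set y in C | P y (s y)]|.

Lemma porbit_conj s g x : porbit (s ^ g) (g x) = g @: porbit s x.
Proof.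
apply/setP => y; apply/porbitP/imsetP.
- case=> i ->; exists ((s ^+ i) x); first exact: mem_porbit.
  by rewrite -conjXg permJ.
- case=> z /porbitP [i ->] ->; exists i; by rewrite -conjXg permJ.
Qed.

Lemma porbits_conj s g : porbits (s ^ g) = (fun C => g @: C) @: porbits s.
Proof.
apply/setP => C; apply/imsetP/imsetP.
- case=> x _ ->; exists (porbit s (g^-1 x)); first exact: imset_f.
  by rewrite -{1}(permKV g x) porbit_conj.
- case=> D /imsetP [x _ ->] ->; exists (g x) => //; by rewrite porbit_conj.
Qed.

Lemma cnt_conj s g C P : cnt (s ^ g) (g @: C) P = cnt s C (fun a b => P (g a) (g b)).
Proof.
rewrite /cnt -[RHS](card_imset _ (@perm_inj _ g)).
apply: eq_card => z; rewrite -(permKV g z) mem_imset; last exact: perm_inj.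
by rewrite !inE mem_imset ?permJ //; exact: perm_inj.
Qed.

Lemma porbits_closed s C y : C \in porbits s -> (s y \in C) = (y \in C).
Proof.
case/imsetP => x _ ->.
by rewrite porbit_sym -(expg1 s) porbit_perm porbit_sym.
Qed.

Lemma cnt_inv s C P : C \in porbits s -> cnt s^-1 C P = cnt s C (fun a b => P b a).
Proof.
move=> HC; rewrite /cnt -[RHS](card_imset _ (@perm_inj _ s)).
apply: eq_card => y; rewrite -(permKV s y) mem_imset; last exact: perm_inj.
by rewrite !inE permK porbits_closed.
Qed.

Lemma weight_conj s g : cyc_weight (s ^ g) =
  \sum_(C in porbits s) minn (cnt s C (fun a b => g b < g a)) (cnt s C (fun a b => g a < g b)).
Proof.
rewrite /cyc_weight porbits_conj big_imset /=.
  apply: eq_bigr => C _.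
  have E1 := cnt_conj s g C (fun a b => b < a).
  have E2 := cnt_conj s g C (fun a b => a < b).
  simpl in E1, E2; rewrite -E1 -E2; by [].
move=> C D _ _; apply: imset_inj; exact: perm_inj.
Qed.

Lemma weight_invconj s g : cyc_weight ((s^-1) ^ g) =
  \sum_(C in porbits s) minn (cnt s C (fun a b => g a < g b)) (cnt s C (fun a b => g b < g a)).
Proof.
rewrite weight_conj porbitsV; apply: eq_bigr => C HC.
by rewrite !cnt_inv.
Qed.

Lemma odd_conj s g : odd_order_perm (s ^ g) = odd_order_perm s.
Proof.
rewrite /odd_order_perm porbits_conj.
apply/forall_inP/forall_inP => H C HC.
- have := H (g @: C) (imset_f _ HC); rewrite card_imset //; exact: perm_inj.
- case/imsetP: HC => D HD ->; rewrite card_imset; [exact: H | exact: perm_inj].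
Qed.

Lemma odd_inv s : odd_order_perm s^-1 = odd_order_perm s.
Proof. by rewrite /odd_order_perm porbitsV. Qed.

End General.
Section Spec.
Variable m : nat.
Local Notation n := m.+4.
Definition o0 : 'I_n := @Ordinal n 0 isT.
Definition o1 : 'I_n := @Ordinal n 1 isT.
Definition o2 : 'I_n := @Ordinal n 2 isT.
Definition om : 'I_n := @Ordinal n m.+3 (ltnSn _).

Lemma eqo (x y : 'I_n) : (x == y) = (val x == val y).
Proof. by []. Qed.

Definition tt12 := tperm o1 o2.

Lemma t_pres (a b : 'I_n) : ~~((a == o1) && (b == o2)) -> ~~((a == o2) && (b == o1)) ->
  (tt12 a < tt12 b) = (a < b).
Proof.
rewrite /tt12 !permE /= !eqo; case: a => a Ha; case: b => b Hb /=.
by do !case: ifP => /= ?; lia.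
Qed.

Definition af (x : 'I_n) := if x == o0 then o1 else if x == o1 then om else
  if x == om then o2 else if x == o2 then o0 else x.
Definition ag (x : 'I_n) := if x == o1 then o0 else if x == om then o1 else
  if x == o2 then om else if x == o0 then o2 else x.
Lemma afK : cancel af ag.
Proof.
move=> [x Hx]; rewrite /af !eqo /=.
do !case: ifP => /eqP ?; subst; rewrite /ag !eqo /= ?eqxx; apply/val_inj => //=.
by rewrite ?eqxx /=; do ![case: ifP => /eqP ?; [lia|]].
Qed.

Definition alpha : 'S_n := perm (can_inj afK).

Lemma aE0 : alpha o0 = o1. Proof. by rewrite permE /af eqxx. Qed.
Lemma aE1 : alpha o1 = om. Proof. by rewrite permE /af !eqo /=. Qed.
Lemma aEm : alpha om = o2. Proof. by rewrite permE /af !eqo /= eqxx. Qed.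
Lemma aE2 : alpha o2 = o0. Proof. by rewrite permE /af !eqo /=. Qed.
Lemma aEx x : x != o0 -> x != o1 -> x != om -> x != o2 -> alpha x = x.
Proof.
move=> h0 h1 hm h2; by rewrite permE /af (negbTE h0) (negbTE h1) (negbTE hm) (negbTE h2).
Qed.

Lemma card_swap (T : finType) (C : {set T}) (P Q : pred T) a b :
  a \in C -> b \in C -> P a -> ~~ Q a -> Q b -> ~~ P b ->
  {in C, forall y, y != a -> y != b -> P y = Q y} ->
  #|[set y in C | P y]| = #|[set y in C | Q y]|.
Proof.
move=> Ca Cb Pa nQa Qb nPb H.
rewrite (cardsD1 a) (cardsD1 b [set y in C | Q y]) !inE Ca Cb Pa Qb /=.
congr (_ + _); apply: eq_card => y; rewrite !inE.
case: (y =P a) => [->|/eqP ya]; first by rewrite (negbTE nQa) !andbF.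
case: (y =P b) => [->|/eqP yb]; first by rewrite (negbTE nPb) !andbF.
rewrite /=; case Cy: (y \in C) => //=; exact: H.
Qed.

Section WithS.
Variable s : 'S_n.
Hypothesis hs0 : s o0 = om.
Hypothesis hsm : s om = o1.

Lemma s_o1 y : s y = o1 -> y = om.
Proof. by rewrite -hsm => /perm_inj. Qed.
Lemma s_om y : s y = om -> y = o0.
Proof. by rewrite -hs0 => /perm_inj. Qed.

Lemma weight_case1 : s o1 != o2 -> cyc_weight (s ^ tt12) = cyc_weight s.
Proof.
move=> h12; rewrite weight_conj /cyc_weight; apply: eq_bigr => C _.
rewrite /cnt /cdes_cycle /casc_cycle; congr minn; apply: eq_card => y; rewrite !inE;
  case: (y \in C) => //=; apply: t_pres; apply/negP => /andP [/eqP h /eqP h'].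
- by have := s_o1 h; rewrite h' => /(congr1 val) /=; lia.
- by rewrite h' in h; rewrite h eqxx in h12.
- by rewrite h in h'; rewrite h' eqxx in h12.
- by have := s_o1 h'; rewrite h => /(congr1 val) /=; lia.
Qed.

Hypothesis h12 : s o1 = o2.

Lemma s_o2 y : s y = o2 -> y = o1.
Proof. by rewrite -h12 => /perm_inj. Qed.

Lemma s2_ne0 : odd_order_perm s -> s o2 != o0.
Proof.
move=> Hodd; apply/eqP => h20.
have HP : porbit s o0 = [set o0; om; o1; o2].
  apply/setP => y; apply/porbitP/idP.
  - case=> i ->; rewrite permX; elim: i => [|i IH] /=; first by rewrite !inE eqxx.
    move: IH; rewrite !inE => /orP [/orP [/orP [] | ] | ] /eqP ->;
      rewrite ?hs0 ?hsm ?h12 ?h20 eqxx ?orbT //.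
  - rewrite !inE => /orP [/orP [/orP [] | ] | ] /eqP ->; [exists 0%N | exists 1%N | exists 2%N | exists 3%N];
      rewrite permX /= ?hs0 ?hsm ?h12 ?h20 //.
have HC : porbit s o0 \in porbits s by apply: imset_f.
move/forall_inP: Hodd => /(_ _ HC); rewrite HP.
have -> : [set o0; om; o1; o2] = [set x in [:: o0; om; o1; o2]].
  by apply/setP => x; rewrite !inE !orbA.
have Hu : uniq [:: o0; om; o1; o2].
  by [].
by rewrite cardsE (card_uniqP Hu).
Qed.


Lemma ne_val (x y : 'I_n) : x != y -> val x != val y.
Proof. by []. Qed.

Section Odd.
Hypothesis Hodd : odd_order_perm s.

Lemma apair y : y != om -> y != o1 ->
  (alpha y < alpha (s y)) = (y < s y) /\ (alpha (s y) < alpha y) = (s y < y).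
Proof.
have u0 := s2_ne0 Hodd.
have u1 : s o2 != o1 by apply/eqP => /s_o1 /(congr1 val) /=; lia.
have u2 : s o2 != o2 by apply/eqP => /s_o2 /(congr1 val) /=.
have um : s o2 != om by apply/eqP => /s_om /(congr1 val) /=.
move=> ym y1.
case: (y =P o0) => [->|/eqP y0].
  by rewrite hs0 aE0 aEm /=; split; lia.
case: (y =P o2) => [->|/eqP y2].
  rewrite aE2 aEx //; move: (ne_val u0) (ne_val u1) (ne_val u2) (ne_val um) => /= *.
  split; lia.
rewrite aEx //.
have sm : s y != om by apply/eqP => /s_om; apply/eqP.
have s1 : s y != o1 by apply/eqP => /s_o1; apply/eqP.
have s2 : s y != o2 by apply/eqP => /s_o2; apply/eqP.
case: (s y =P o0) => [->|/eqP sy0]; last by rewrite aEx.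
rewrite aE0; move: (ne_val y0) (ne_val y1) (ne_val y2) => /= *; split; lia.
Qed.

Lemma weight_case2 : cyc_weight ((s^-1) ^ alpha) = cyc_weight s.
Proof.
rewrite weight_invconj /cyc_weight; apply: eq_bigr => C HC.
rewrite [RHS]minnC /cdes_cycle /casc_cycle /cnt /=; congr minn.
- case: (boolP (o0 \in C)) => H0.
  + have Cm : om \in C by rewrite -hs0 porbits_closed.
    have C1 : o1 \in C by rewrite -hsm porbits_closed.
    apply: (card_swap (a:=om) (b:=o1)) => //.
    * by rewrite hsm aEm aE1 /=; lia.
    * by rewrite hsm.
    * by rewrite h12.
    * by rewrite h12 aE1 aE2.
    * by move=> y _ ya yb; exact: (apair ya yb).1.
  + have nm : om \notin C by rewrite -hs0 porbits_closed.
    have n1 : o1 \notin C by rewrite -hsm porbits_closed.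
    have n2 : o2 \notin C by rewrite -h12 porbits_closed.
    have fixC y : y \in C -> alpha y = y.
      move=> Hy; apply: aEx; apply/eqP => e; rewrite e in Hy.
      - by rewrite Hy in H0. - by rewrite Hy in n1. - by rewrite Hy in nm. - by rewrite Hy in n2.
    apply: eq_card => y; rewrite !inE; case Hy: (y \in C) => //=.
    have Hsy : s y \in C by rewrite porbits_closed.
    by rewrite !fixC.
- case: (boolP (o0 \in C)) => H0.
  + have Cm : om \in C by rewrite -hs0 porbits_closed.
    have C1 : o1 \in C by rewrite -hsm porbits_closed.
    apply: (card_swap (a:=o1) (b:=om)) => //.
    * by rewrite h12 aE1 aE2.
    * by rewrite h12.
    * by rewrite hsm.
    * by rewrite hsm aEm aE1 /=; lia.
    * by move=> y _ ya yb; exact: (apair yb ya).2.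
  + have nm : om \notin C by rewrite -hs0 porbits_closed.
    have n1 : o1 \notin C by rewrite -hsm porbits_closed.
    have n2 : o2 \notin C by rewrite -h12 porbits_closed.
    have fixC y : y \in C -> alpha y = y.
      move=> Hy; apply: aEx; apply/eqP => e; rewrite e in Hy.
      - by rewrite Hy in H0. - by rewrite Hy in n1. - by rewrite Hy in nm. - by rewrite Hy in n2.
    apply: eq_card => y; rewrite !inE; case Hy: (y \in C) => //=.
    have Hsy : s y \in C by rewrite porbits_closed.
    by rewrite !fixC.
Qed.
End Odd.
End WithS.

Definition Phi (s : 'S_n) := if s o1 == o2 then (s^-1) ^ alpha else s ^ tt12.
Definition Psi (s : 'S_n) := if s o2 == o1 then (s^-1) ^ (alpha^-1) else s ^ tt12.

Lemma tE0 : tt12 o0 = o0. Proof. by rewrite tpermD. Qed.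
Lemma tEm : tt12 om = om. Proof. by rewrite tpermD // eqo /=. Qed.
Lemma tE1 : tt12 o1 = o2. Proof. exact: tpermL. Qed.
Lemma tE2 : tt12 o2 = o1. Proof. exact: tpermR. Qed.

Lemma ainv x y : alpha x = y -> alpha^-1 y = x.
Proof. by move<-; rewrite permK. Qed.

Definition Aset (d : int) := [set s : 'S_n | [&& odd_order_perm s,
  Posz (cyc_weight s) == d, s o0 == om & s om == o1]].
Definition Bset (d : int) := [set s : 'S_n | [&& odd_order_perm s,
  Posz (cyc_weight s) == d, s o0 == om & s om == o2]].

Lemma PhiW (s : 'S_n) : odd_order_perm s -> s o0 = om -> s om = o1 ->
  cyc_weight (Phi s) = cyc_weight s.
Proof.
move=> Ho h0 hm; rewrite /Phi; case: ifP => [/eqP h12|/negbT h12].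
- exact: weight_case2.
- exact: weight_case1.
Qed.

Lemma Phi_odd (s : 'S_n) : odd_order_perm (Phi s) = odd_order_perm s.
Proof. by rewrite /Phi; case: ifP => _; rewrite odd_conj ?odd_inv. Qed.
Lemma Psi_odd (s : 'S_n) : odd_order_perm (Psi s) = odd_order_perm s.
Proof. by rewrite /Psi; case: ifP => _; rewrite odd_conj ?odd_inv. Qed.

Lemma Phi_vals (s : 'S_n) : s o0 = om -> s om = o1 -> Phi s o0 = om /\ Phi s om = o2.
Proof.
move=> h0 hm; rewrite /Phi; case: ifP => [/eqP h12|/negbT h12].
- split.
  + by rewrite -{1}aE2 permJ -h12 permK aE1.
  + by rewrite -{1}aE1 permJ -hm permK aEm.
- split.
  + by rewrite -{1}tE0 permJ h0 tEm.
  + by rewrite -{1}tEm permJ hm tE1.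
Qed.

Lemma Psi_vals (s : 'S_n) : s o0 = om -> s om = o2 -> Psi s o0 = om /\ Psi s om = o1.
Proof.
move=> h0 hm; rewrite /Psi; case: ifP => [/eqP h21|/negbT h21].
- split.
  + by rewrite -{1}(ainv aE0) permJ -h21 permK (ainv aEm).
  + by rewrite -{1}(ainv aEm) permJ -hm permK (ainv aE1).
- split.
  + by rewrite -{1}tE0 permJ h0 tEm.
  + by rewrite -{1}tEm permJ hm tE2.
Qed.

Lemma PsiPhi (s : 'S_n) : s o0 = om -> s om = o1 -> Psi (Phi s) = s.
Proof.
move=> h0 hm; rewrite /Phi; case: ifP => [/eqP h12|/negbT h12].
- rewrite /Psi ifT.
    by rewrite -conjVg invgK conjgK.
  by rewrite -{1}aEm permJ -h0 permK aE0.
- rewrite /Psi ifF.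
    by rewrite -conjgM tperm2 conjg1.
  rewrite -{1}tE1 permJ; apply/negbTE; apply: contra h12 => /eqP.
  by rewrite -tE2 => /perm_inj ->.
Qed.

Lemma PhiPsi (s : 'S_n) : s o0 = om -> s om = o2 -> Phi (Psi s) = s.
Proof.
move=> h0 hm; rewrite /Psi; case: ifP => [/eqP h21|/negbT h21].
- rewrite /Phi ifT.
    by rewrite -conjVg invgK conjgKV.
  by rewrite -{1}(ainv aE1) permJ -h0 permK (ainv aE2).
- rewrite /Phi ifF.
    by rewrite -conjgM tperm2 conjg1.
  rewrite -{1}tE2 permJ; apply/negbTE; apply: contra h21 => /eqP.
  by rewrite -tE1 => /perm_inj ->.
Qed.

Lemma card_AB d : #|Aset d| = #|Bset d|.
Proof.
apply/eqP; rewrite eqn_leq; apply/andP; split.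
- rewrite -(@card_in_imset _ _ Phi (Aset d)); last first.
    apply: (can_in_inj (g:=Psi)) => s; rewrite inE => /and4P [_ _ /eqP h0 /eqP hm].
    exact: PsiPhi.
  apply: subset_leq_card; apply/subsetP => _ /imsetP [s Hs ->].
  move: Hs; rewrite !inE => /and4P [Ho /eqP Hw /eqP h0 /eqP hm].
  have [v0 vm] := Phi_vals h0 hm.
  by rewrite Phi_odd Ho PhiW // Hw v0 vm !eqxx.
- rewrite -(@card_in_imset _ _ Psi (Bset d)); last first.
    apply: (can_in_inj (g:=Phi)) => s; rewrite inE => /and4P [_ _ /eqP h0 /eqP hm].
    exact: PhiPsi.
  apply: subset_leq_card; apply/subsetP => _ /imsetP [s Hs ->].
  move: Hs; rewrite !inE => /and4P [Ho /eqP Hw /eqP h0 /eqP hm].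
  have [v0 vm] := Psi_vals h0 hm.
  have Ho' : odd_order_perm (Psi s) by rewrite Psi_odd.
  rewrite Ho' -(PhiW Ho' v0 vm) PhiPsi // Hw v0 vm !eqxx.
  by [].
Qed.

Local Close Scope group_scope.
Lemma ex1 (s : 'S_n) : [exists x : 'I_n, (x.+1 == 1) && ((s x).+1 == n)] = (s o0 == om).
Proof.
apply/existsP/eqP => [[x /andP [/eqP h1 /eqP h2]] | h].
- have hx : x = o0 by apply/val_inj => /=; lia.
  rewrite -hx.
  by apply/val_inj => /=; lia.
- by exists o0; rewrite h /= !eqxx.
Qed.

Lemma ex2 (s : 'S_n) (o : 'I_n) : [exists y : 'I_n, (y.+1 == n) && ((s y).+1 == (val o).+1)] = (s om == o).
Proof.
apply/existsP/eqP => [[x /andP [/eqP h1 /eqP h2]] | h].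
- have hx : x = om by apply/val_inj => /=; lia.
  rewrite -hx.
  by apply/val_inj; case: h2.
- by exists om; rewrite h /= !eqxx.
Qed.

Lemma pA d : p_count n d 1 2 = #|Aset d|.
Proof.
rewrite /p_count; apply: eq_card => s; rewrite !inE ex1.
by rewrite (ex2 s o1).
Qed.

Lemma pB d : p_count n d 1 3 = #|Bset d|.
Proof.
rewrite /p_count; apply: eq_card => s; rewrite !inE ex1.
by rewrite (ex2 s o2).
Qed.
End Spec.

Local Close Scope group_scope.
Theorem lemma4p2 (n : nat) (d : int) (hn : 4 <= n) :
  p_count n d 1 2 = p_count n d 1 3.
Proof.
have [m ->] : exists m, n = m.+4 by exists (n - 4); lia.
by rewrite pA pB card_AB.
Qed.
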